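(* Let $f\ge 1$ and $k\ge 3$ be integers and let there be $n=kf+1$ validators, each maintaining a local DAG as described in the context (Tusk setting). Let $p_i$ be a validator and $w$ a wave such that $DAG_i[\mathit{round}(w,2)]$ contains at least $(k-1)f+1$ vertices. Then there are at least $(k-2)f+1$ vertices $v\in DAG_i[\mathit{round}(w,1)]$ that satisfy the commit rule, i.e. for each of them at least $f+1$ vertices of $DAG_i[\mathit{round}(w,2)]$ have an edge to $v$.
   Context: Setting: $n=kf+1$ validators $p_1,\dots,p_n$, at most $f$ Byzantine. All local DAGs are subsets of one common set of vertices. Each vertex has a round number $r\ge1$ and a source validator; for each validator and round there is at most one vertex (no equivocation). Hence each round has at most $kf+1$ vertices. Every vertex of round $r\ge2$ has edges to $(k-1)f+1$ vertices of round $r-1$ with distinct sources. Each validator $p_i$ has a local DAG $DAG_i$, closed under edges; $DAG_i[r]$ is its set of round-$r$ vertices. Waves consist of 3 rounds, pipelined so that round 3 of wave $w$ is round 1 of wave $w+1$: $\mathit{round}(w,j)=2(w-1)+j$, $j=1,2,3$. Commit rule: a vertex $v$ of $\mathit{round}(w,1)$ satisfies the commit rule in $DAG_i$ if at least $f+1$ vertices of $DAG_i[\mathit{round}(w,2)]$ have an edge to $v$. *)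

(* Defs.v *)
From mathcomp Require Import all_boot.
Set Implicit Arguments. Unset Strict Implicit. Unset Printing Implicit Defensive.

(* Validators are 'I_n.  Since there is no equivocation, a vertex is
   identified by its pair (round, source). *)
Definition vertex (n : nat) := (nat * 'I_n)%type.

Definition round (w j : nat) : nat := 2 * (w - 1) + j.

(* Standing assumptions of the Tusk setting (context):
   - V is the common set of vertices, all local DAGs are subsets of V;
   - every vertex has round >= 1;
   - edges relate vertices of V;
   - every vertex of round r >= 2 has edges to (k-1)f+1 vertices of
     round r-1 (with distinct sources, automatic in this encoding);
   - each local DAG is a subset of V closed under edges. *)
Definition tusk_setting (k f : nat) (V : pred (vertex (k * f + 1)))
    (edge : rel (vertex (k * f + 1)))
    (DAG : 'I_(k * f + 1) -> pred (vertex (k * f + 1))) : Prop :=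
  [/\ (forall u, V u -> 1 <= u.1),
      (forall u v, edge u v -> V u /\ V v),
      (forall u, V u -> 2 <= u.1 ->
         #|[set j : 'I_(k * f + 1) | edge u (u.1.-1, j)]| = (k - 1) * f + 1),
      (forall i u, DAG i u -> V u) &
      (forall i u v, DAG i u -> edge u v -> DAG i v)].

Definition dag_round (n : nat) (D : pred (vertex n)) (r : nat) : {set 'I_n} :=
  [set j : 'I_n | D (r, j)].

Definition commit_rule (n f : nat) (edge : rel (vertex n)) (D : pred (vertex n))
    (w : nat) (v : vertex n) : bool :=
  f + 1 <= #|[set j in dag_round D (round w 2) | edge (round w 2, j) v]|.

(* Main.v *)
Require Import Defs.
From mathcomp Require Import all_boot.
From mathcomp Require Import zify.

Theorem lemma4 (f k : nat) (V : pred (vertex (k * f + 1)))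
    (edge : rel (vertex (k * f + 1)))
    (DAG : 'I_(k * f + 1) -> pred (vertex (k * f + 1)))
    (i : 'I_(k * f + 1)) (w : nat) :
  1 <= f -> 3 <= k -> 1 <= w ->
  tusk_setting V edge DAG ->
  (k - 1) * f + 1 <= #|dag_round (DAG i) (round w 2)| ->
  (k - 2) * f + 1 <=
    #|[set j in dag_round (DAG i) (round w 1) |
        commit_rule f edge (DAG i) w (round w 1, j)]|.
Proof.
move=> hf hk hw [HV1 HE Hdeg HDV Hcl] HS.
set S := dag_round (DAG i) (round w 2).
set r1 := round w 1. set r2 := round w 2.
have r21 : r2.-1 = r1 by rewrite /r2 /r1 /round addnS.
set deg := fun j : 'I_(k * f + 1) => #|[set u in S | edge (r2, u) (r1, j)]|.
set C := [set j | f + 1 <= deg j].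
have sub : C \subset [set j in dag_round (DAG i) r1 |
        commit_rule f edge (DAG i) w (r1, j)].
  apply/subsetP => j; rewrite !inE /commit_rule -/r2 -/S => Hj.
  rewrite Hj andbT.
  have : 0 < deg j by apply: leq_trans Hj; rewrite addn1.
  rewrite card_gt0 => /set0Pn [u]; rewrite inE => /andP [uS Heu].
  apply: (Hcl i (r2, u)) => //.
  by move: uS; rewrite inE.
apply: leq_trans (subset_leq_card sub).
set s := #|S|. set c := #|C|. set n := k * f + 1.
have E1 : \sum_(u in S) ((k - 1) * f + 1) = \sum_j deg j.
  transitivity (\sum_(u in S) \sum_j (edge (r2, u) (r1, j) : nat)).
    apply: eq_bigr => u uS.
    have Vu : V (r2, u) by apply: (HDV i); move: uS; rewrite inE.
    have := Hdeg _ Vu; rewrite /= r21 => <-; last by rewrite /r2 /round; lia.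
    rewrite -sum1_card big_mkcond /=; apply: eq_bigr => j _.
    by rewrite inE; case: (edge _ _).
  rewrite exchange_big /=; apply: eq_bigr => j _.
  rewrite /deg -sum1_card big_mkcond /= [RHS]big_mkcond /=.
  apply: eq_bigr => u _; rewrite !inE.
  by case: (DAG i _); case: (edge _ _).
have E2 : \sum_j deg j <= c * s + (n - c) * f.
  rewrite (bigID (fun j => j \in C)) /=.
  apply: leq_add.
    have H1 : forall j, j \in C -> deg j <= s.
      by move=> j _; rewrite /deg /s; apply: subset_leq_card; apply/subsetP => u; rewrite inE => /andP [].
    apply: (@leq_trans (\sum_(j in C) s)); first exact: leq_sum.
    by rewrite sum_nat_const mulnC.
  have H2 : forall j, j \notin C -> deg j <= f.
    by move=> j; rewrite inE -ltnNge addn1 ltnS.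
  apply: (@leq_trans (\sum_(j < k * f + 1 | j \notin C) f)); first exact: leq_sum.
  rewrite sum_nat_const leq_mul2r; apply/orP; right.
  rewrite (eq_card (B:=~: C)); last by move=> j; rewrite in_setC.
  have := cardsC C; rewrite card_ord -/c -/n; lia.
rewrite sum_nat_const -/s in E1.
have sle : c <= n by rewrite /c; have := max_card C; rewrite card_ord.
rewrite leqNgt; apply/negP => Hc.
have Hc' : c <= (k - 2) * f by lia.
have sf : f <= s.
  apply: leq_trans HS; rewrite -/s.
  apply: leq_trans (leq_addr 1 _); apply: leq_pmull; lia.
have E0 := leq_trans (eq_leq E1) E2.
have nE : n = (k - 2) * f + 2 * f + 1 by rewrite /n -mulnDl subnK //; lia.
have k1 : k - 1 = (k - 2) + 1 by lia.
have ha : 1 <= k - 2 by lia.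
move: E0 Hc' HS sle ha; rewrite -/s nE k1; move: (k - 2) => a.
clear E1 E2.
move=> E1 Hc' HS sle ha.
have af : f <= a * f by apply: leq_pmull.
have e1 : c * s = c * (s - f) + c * f by rewrite -mulnDr subnK.
have e2 : (a * f + 2 * f + 1 - c) * f + c * f = (a * f + 2 * f + 1) * f
  by rewrite -mulnDl subnK // -mulnDl.
have e3 : c * (s - f) <= a * f * (s - f) by rewrite leq_mul2r Hc' orbT.
have e4 : a * f * (s - f) + a * f * f = a * f * s by rewrite -mulnDr subnK.
have e5 : s * ((a + 1) * f + 1) = a * f * s + s * f + s
  by nia.
have e6 : (a * f + 2 * f + 1) * f = a * f * f + 2 * (f * f) + f
  by nia.
have e9 : 2 * f + 1 <= s.
  apply: leq_trans HS; rewrite mulnDl mul1n; lia.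
have e7 : (2 * f + 1) * f <= s * f by rewrite leq_mul2r e9 orbT.
have e8 : (2 * f + 1) * f = 2 * (f * f) + f by rewrite mulnDl mul1n mulnA.
rewrite mulnDl in E1.
lia.
Qed.
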